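(* For every $m\in\mathbb N_+$, $k\ge1$, $\xi\in\mathbb R^d$ and every configuration $\mathbf a$, $$\sum_{F\subset E_d(\square_m),|F|=k}D_F\mathscr E_{m,\xi}(\mathbf a)=\frac1{|\square_m|}\Big\langle\nabla\ell_\xi,\ \mathbf a\sum_{F\subset E_d(\square_m),|F|=k}(D_F\nabla v_{m,\xi})(\mathbf a)\Big\rangle_{\square_m}+\frac1{|\square_m|}\sum_{e\in E_d(\square_m)}\Big\langle\nabla\ell_\xi,\ (\mathbf a^e-\mathbf a)\sum_{G\subset E_d(\square_m),|G|=k-1}(D_G\nabla v_{m,\xi})(\mathbf a^e)\Big\rangle_{\square_m}.$$
   Context: Bond configurations $\mathbf a\in\{0,1\}^{E_d}$ on $\mathbb Z^d$. $E_d(U)$: nearest-neighbour edges with both endpoints in $U$; $\partial U=\{x\in U:\exists y\sim x, y\notin U\}$, $\mathrm{int}(U)=U\setminus\partial U$; $\square_m=\mathbb Z^d\cap(-3^m/2,3^m/2)^d$; $\ell_\xi(x)=\xi\cdot x$. For $u:\mathbb Z^d\to\mathbb R$, $\nabla u(x,y)=u(y)-u(x)$ on oriented edges; $\nabla\cdot(\mathbf a\nabla u)(x)=\sum_{z\sim x}\mathbf a(\{x,z\})(u(z)-u(x))$; for vector fields, $\langle F,G\rangle_V=\sum_{e\in E_d(V)}F(e)G(e)$, and $(\mathbf b F)(e)=\mathbf b(e)F(e)$. $\mathscr E_{m,\xi}(\mathbf a)=\inf_{v\in\ell_\xi+C_0(\square_m)}|\square_m|^{-1}\sum_{e\in E_d(\square_m)}\mathbf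 a(e)|\nabla v(e)|^2$, with $C_0(U)$ the functions vanishing on $\partial U$. For each configuration $\mathbf b$, $v_{m,\xi}(\mathbf b)$ is a fixed function on $\square_m$ with $v_{m,\xi}(\mathbf b)=\ell_\xi$ on $\partial\square_m$ and $-\nabla\cdot(\mathbf b\nabla v_{m,\xi}(\mathbf b))=0$ at every $x\in\mathrm{int}(\square_m)$ (such a function exists: harmonic on clusters connected to $\partial\square_m$, constant on the other clusters; it attains the infimum in $\mathscr E_{m,\xi}(\mathbf b)$). $\mathbf a^G(e)=\mathbf 1_{e\in G}+\mathbf a(e)\mathbf 1_{e\notin G}$, $\mathbf a^e=\mathbf a^{\{e\}}$; $D_Gf(\mathbf a)=\sum_{G'\subset G}(-1)^{|G\setminus G'|}f(\mathbf a^{G'})$, and $(D_Gf)(\mathbf a^e)$ means $D_Gf$ evaluated at the configuration $\mathbf a^e$. *)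

(* Defs.v *)
From HB Require Import structures.
From mathcomp Require Import all_boot all_order all_algebra.
From mathcomp Require Import boolp classical_sets reals.
Set Implicit Arguments. Unset Strict Implicit. Unset Printing Implicit Defensive.
Import Order.TTheory GRing.Theory Num.Theory.
Local Open Scope ring_scope.
Local Open Scope classical_set_scope.

Definition pt (d : nat) := {ffun 'I_d -> int}.
(* The (unoriented) nearest-neighbour edge {x, x + e_i} is represented by
   (x, i); its canonical orientation is x -> x + e_i. *)
Definition edge (d : nat) := (pt d * 'I_d)%type.
Definition config (d : nat) := edge d -> bool.

Definition shift (d : nat) (x : pt d) (i : 'I_d) (s : int) : pt d :=
  [ffun j => x j + (if j == i then s else 0)].

Definition inbox (d m : nat) (x : pt d) : bool :=
  [forall i, `|2 * x i| < (3 ^ m)%:Z].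
Definition bdry (d m : nat) (x : pt d) : bool :=
  inbox m x && [exists i, ~~ inbox m (shift x i 1) || ~~ inbox m (shift x i (-1))].
Definition interior (d m : nat) (x : pt d) : bool := inbox m x && ~~ bdry m x.

(* Finite enumeration of square_m: raw coordinates in {0,..,3^m-1}, shifted
   by -(3^m-1)/2; emb is a bijection onto the points of square_m. *)
Definition bpt (d m : nat) := {ffun 'I_d -> 'I_(3 ^ m)}.
Definition emb (d m : nat) (x : bpt d m) : pt d :=
  [ffun i => ((x i : nat)%:Z - ((3 ^ m).-1./2)%:Z)%R].
Definition bedge (d m : nat) := (bpt d m * 'I_d)%type.
Definition toE (d m : nat) (e : bedge d m) : edge d := (emb e.1, e.2).
Definition Ebox (d m : nat) : {set bedge d m} :=
  [set e | inbox m (emb e.1) && inbox m (shift (emb e.1) e.2 1)].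
Definition box_card (d m : nat) : nat := #|{: bpt d m}|.

Section Analytic.
Variable R : realType.
Variable d : nat.

Definition grad (u : pt d -> R) (e : edge d) : R := u (shift e.1 e.2 1) - u e.1.

Definition lxi (xi : 'rV[R]_d) (x : pt d) : R := \sum_i xi 0 i * (x i)%:~R.

Definition div_a_grad (a : config d) (u : pt d -> R) (x : pt d) : R :=
  \sum_i ((a (x, i))%:R * (u (shift x i 1) - u x)
          + (a (shift x i (-1), i))%:R * (u (shift x i (-1)) - u x)).

Definition C0 (m : nat) (f : pt d -> R) : Prop := forall x, bdry m x -> f x = 0.

Definition energy_of (m : nat) (a : config d) (v : pt d -> R) : R :=
  (box_card d m)%:R^-1 *
    \sum_(e in Ebox d m) (a (toE e))%:R * (grad v (toE e)) ^+ 2.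

Definition Energy (m : nat) (xi : 'rV[R]_d) (a : config d) : R :=
  inf [set energy_of m a v | v in [set v : pt d -> R | C0 m (fun x => v x - lxi xi x)]].

Definition upd (m : nat) (a : config d) (G : {set bedge d m}) : config d :=
  fun y => [exists e in G, toE e == y] || a y.

Definition DG (m : nat) (G : {set bedge d m}) (f : config d -> R) (a : config d) : R :=
  \sum_(G' : {set bedge d m} | G' \subset G) (-1) ^+ #|G :\: G'| * f (upd a G').

(* v is an admissible choice of v_{m,xi}(.): for each configuration b,
   v b = ell_xi on ∂square_m and -∇·(b ∇ v b) = 0 on int(square_m). *)
Definition is_vsel (m : nat) (xi : 'rV[R]_d) (v : config d -> pt d -> R) : Prop :=
  forall b : config d,
    (forall x, bdry m x -> v b x = lxi xi x) /\
    (forall x, interior m x -> - div_a_grad b (v b) x = 0).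
End Analytic.

(* Main.v *)
Require Import Defs.
From HB Require Import structures.
From mathcomp Require Import all_boot all_order all_algebra.
From mathcomp Require Import boolp classical_sets reals.
From mathcomp Require Import zify ring.
Import Order.TTheory GRing.Theory Num.Theory.
Set Implicit Arguments. Unset Strict Implicit. Unset Printing Implicit Defensive.
Local Open Scope ring_scope.

Section Geo.
Variables (d m : nat).
Let c := ((3 ^ m).-1./2)%N.

Lemma threem : (3 ^ m = (c * 2).+1)%N.
Proof.
have := odd_double_half (3 ^ m); rewrite oddX orbT /= => h.
rewrite /c -{2}h add1n /= doubleK muln2 -{1}h add1n //.
Qed.

Lemma inboxE (y : pt d) : inbox m y = [forall j, (- c%:Z <= y j <= c%:Z)].
Proof.
rewrite /inbox threem; apply: eq_forallb => j.
rewrite ltr_norml. apply/idP/idP => /andP[h1 h2]; apply/andP; split; lia.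
Qed.

Lemma emb_in (x : bpt d m) : inbox m (emb x).
Proof.
rewrite inboxE; apply/forallP => j; rewrite /emb ffunE -/c.
have h : (x j < (c*2).+1)%N by rewrite -threem.
apply/andP; split; lia.
Qed.

Lemma emb_inj : injective (@emb d m).
Proof.
move=> x y /ffunP h; apply/ffunP => j; have := h j; rewrite /emb !ffunE => e.
apply: val_inj => /=; lia.
Qed.

Lemma toE_inj : injective (@toE d m).
Proof. by move=> [x i] [y j] [/emb_inj -> ->]. Qed.

Definition sucb (i : 'I_d) (x : bpt d m) : bpt d m :=
  [ffun j => if j == i then ordS (x j) else x j].
Definition predb (i : 'I_d) (x : bpt d m) : bpt d m :=
  [ffun j => if j == i then ord_pred (x j) else x j].
Lemma sucbK i : cancel (sucb i) (predb i).
Proof.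
move=> x; apply/ffunP => j; rewrite !ffunE; case: eqP => // ->.
by rewrite ordSK.
Qed.
Lemma sucb_inj i : injective (sucb i).
Proof. exact: can_inj (sucbK i). Qed.

Lemma shiftK (y : pt d) i : shift (shift y i 1) i (-1) = y.
Proof. apply/ffunP => j; rewrite !ffunE; case: (j == i); [by rewrite addrK | by rewrite !addr0]. Qed.

Lemma emb_sucb (x : bpt d m) i : ((x i).+1 < 3 ^ m)%N ->
  emb (sucb i x) = shift (emb x) i 1.
Proof.
move=> h; apply/ffunP => j; rewrite !ffunE; case: eqP => [->|] //=.
rewrite modn_small //; lia.
by rewrite addr0.
Qed.

Lemma shift_out (x : bpt d m) i : ~~ ((x i).+1 < 3 ^ m)%N ->
  ~~ inbox m (shift (emb x) i 1).
Proof.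
move=> h; rewrite inboxE negb_forall; apply/existsP; exists i.
rewrite !ffunE eqxx /= -/c; have h2 : (x i < (c*2).+1)%N by rewrite -threem.
have {}h : ~~ ((x i).+1 < (c*2).+1)%N by rewrite -threem.
apply/negP => /andP[h3 h4]. lia.
Qed.

Lemma shift_out2 (x : bpt d m) i : ~~ ((x i).+1 < 3 ^ m)%N ->
  ~~ inbox m (shift (emb (sucb i x)) i (-1)).
Proof.
move=> h; rewrite inboxE negb_forall; apply/existsP; exists i.
rewrite !ffunE eqxx /= -/c; have h2 : (x i < (c*2).+1)%N by rewrite -threem.
have {}h : ~~ ((x i).+1 < (c*2).+1)%N by rewrite -threem.
have -> : ((x i).+1 %% 3 ^ m = 0)%N.
  have -> : ((x i).+1 = 3 ^ m)%N by have := threem; lia.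
  by rewrite modnn.
apply/negP => /andP[h3 h4]. lia.
Qed.
End Geo.
Section SBP.
Variables (R : realType) (d m : nat).

Lemma sbp (b : config d) (u phi : pt d -> R) :
  (forall x, bdry m x -> phi x = 0) ->
  (forall x, interior m x -> div_a_grad b u x = 0) ->
  \sum_(e in Ebox d m) (b (toE e))%:R * grad u (toE e) * grad phi (toE e) = 0.
Proof.
move=> hphi hdiv.
pose T (x : bpt d m) (i : 'I_d) := (b (emb x, i))%:R * (u (shift (emb x) i 1) - u (emb x)).
pose W (x : bpt d m) (i : 'I_d) := phi (emb x) * ((b (shift (emb x) i (-1), i))%:R *
   (u (emb x) - u (shift (emb x) i (-1)))).
have H0 : \sum_(x : bpt d m) phi (emb x) * div_a_grad b u (emb x) = 0.
  apply: big1 => x _.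
  case hb: (bdry m (emb x)); first by rewrite hphi // mul0r.
  by rewrite hdiv ?mulr0 // /interior emb_in hb.
have H1 : \sum_(x : bpt d m) phi (emb x) * div_a_grad b u (emb x) =
   \sum_(x : bpt d m) \sum_(i : 'I_d) (phi (emb x) * T x i) - \sum_(x : bpt d m) \sum_(i : 'I_d) W x i.
  rewrite -sumrB; apply: eq_bigr => x _.
  rewrite -sumrB /div_a_grad big_distrr; apply: eq_bigr => i _.
  rewrite /T /W /=. ring.
have HA : \sum_(x : bpt d m) \sum_(i : 'I_d) (if (x, i) \in Ebox d m then T x i * phi (emb x) else 0)
   = \sum_(x : bpt d m) \sum_(i : 'I_d) (phi (emb x) * T x i).
  apply: eq_bigr => x _; apply: eq_bigr => i _.
  case: ifP => hE; first by rewrite mulrC.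
  rewrite hphi ?mul0r //.
  rewrite /bdry emb_in /=; apply/existsP; exists i.
  move: hE; rewrite inE /= emb_in /= => ->; done.
have HB : \sum_(x : bpt d m) \sum_(i : 'I_d) (if (x, i) \in Ebox d m then T x i * phi (shift (emb x) i 1) else 0)
   = \sum_(x : bpt d m) \sum_(i : 'I_d) W x i.
  rewrite exchange_big [RHS]exchange_big; apply: eq_bigr => i _.
  rewrite [RHS](reindex_inj (@sucb_inj d m i)); apply: eq_bigr => x _.
  case h: ((x i).+1 < 3 ^ m)%N.
    have e1 := emb_sucb h.
    rewrite inE /= emb_in /= -e1 emb_in /W e1 shiftK /T; ring.
  have h' : ~~ ((x i).+1 < 3 ^ m)%N by rewrite h.
  rewrite inE /= emb_in /= (negbTE (shift_out h')) /W hphi ?mul0r //.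
  rewrite /bdry emb_in /=; apply/existsP; exists i.
  by rewrite (shift_out2 h') orbT.
have -> : \sum_(e in Ebox d m) (b (toE e))%:R * grad u (toE e) * grad phi (toE e) =
  \sum_(x : bpt d m) \sum_(i : 'I_d) (if (x, i) \in Ebox d m then T x i * phi (shift (emb x) i 1) else 0)
  - \sum_(x : bpt d m) \sum_(i : 'I_d) (if (x, i) \in Ebox d m then T x i * phi (emb x) else 0).
  transitivity (\sum_(p : bpt d m * 'I_d) (if p \in Ebox d m then T p.1 p.2 * phi (shift (emb p.1) p.2 1) else 0)
     - \sum_(p : bpt d m * 'I_d) (if p \in Ebox d m then T p.1 p.2 * phi (emb p.1) else 0)).
    rewrite -sumrB big_mkcond; apply: eq_bigr => -[x i] _ /=.
    case: ifP => _; last by rewrite subr0.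
    rewrite /T /grad /toE /=; ring.
  by rewrite !pair_bigA; congr (_ - _); apply: eq_bigr => -[x i].
rewrite HA HB.
by apply/eqP; rewrite -oppr_eq0 opprB -H1 H0.
Qed.
End SBP.
Section En.
Variables (R : realType) (d m : nat) (xi : 'rV[R]_d) (v : config d -> pt d -> R).

Lemma gradB (f g : pt d -> R) e : grad (fun x => f x - g x) e = grad f e - grad g e.
Proof. rewrite /grad; ring. Qed.

Lemma energy_v : is_vsel m xi v -> forall b : config d,
  Energy m xi b = (box_card d m)%:R^-1 *
     \sum_(e in Ebox d m) grad (lxi xi) (toE e) * ((b (toE e))%:R * grad (v b) (toE e)).
Proof.
move=> hv b; have [hb hi] := hv b.
have hi' : forall x, interior m x -> div_a_grad b (v b) x = 0.
  by move=> x /hi /eqP; rewrite oppr_eq0 => /eqP.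
have EE : Energy m xi b = energy_of m b (v b).
rewrite /Energy; set S := (X in inf X).
have SE : S (energy_of m b (v b)).
  exists (v b) => //= x hx; by rewrite hb // subrr.
have lbE : lbound S (energy_of m b (v b)).
  move=> y [w /= hw <-].
  have key : \sum_(e in Ebox d m) (b (toE e))%:R * grad (v b) (toE e) *
     grad (fun x => w x - v b x) (toE e) = 0.
    apply: sbp => // x hx; move/(_ x hx): hw => /= /eqP; rewrite subr_eq0 => /eqP ->.
    by rewrite hb // subrr.
  rewrite /energy_of -subr_ge0 -mulrBr mulr_ge0 //.
    by rewrite invr_ge0 ler0n.
  rewrite -sumrB.
  have -> : \sum_(i in Ebox d m) ((b (toE i))%:R * grad w (toE i) ^+ 2 -
      (b (toE i))%:R * grad (v b) (toE i) ^+ 2) =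
    \sum_(i in Ebox d m) (b (toE i))%:R * (grad (fun x => w x - v b x) (toE i)) ^+ 2
    + 2 * \sum_(e in Ebox d m) (b (toE e))%:R * grad (v b) (toE e) *
     grad (fun x => w x - v b x) (toE e).
    rewrite big_distrr -big_split /=; apply: eq_bigr => e _.
    rewrite gradB; ring.
  rewrite key mulr0 addr0; apply: sumr_ge0 => e _.
  by rewrite mulr_ge0 ?ler0n ?sqr_ge0.
  apply/le_anti/andP; split.
    by apply: (ge_inf _ SE); exists (energy_of m b (v b)).
  by apply: lb_le_inf => //; exists (energy_of m b (v b)).
rewrite EE.
rewrite /energy_of; congr (_ * _).
have key : \sum_(e in Ebox d m) (b (toE e))%:R * grad (v b) (toE e) *
     grad (fun x => v b x - lxi xi x) (toE e) = 0.
  apply: sbp => // x hx; by rewrite hb // subrr.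
apply/eqP; rewrite -subr_eq0 -sumrB -[X in _ == X]key; apply/eqP.
apply: eq_bigr => e _; rewrite gradB; ring.
Qed.
End En.
Section Comb.
Variables (R : realType) (d m : nat).
Implicit Types (b : config d) (G F : {set bedge d m}) (e : bedge d m).

Lemma upd_toE b G e : upd b G (toE e) = (e \in G) || b (toE e).
Proof.
rewrite /upd; congr (_ || _); apply/existsP/idP => [[e' /andP[h /eqP/toE_inj <-]] //|h].
by exists e; rewrite h eqxx.
Qed.

Lemma ex1 e y : [exists e' in [set e], toE e' == y] = (toE e == y).
Proof.
apply/existsP/idP => [[e' /andP[/finset.set1P -> ->]] // | h].
by exists e; rewrite finset.set11.
Qed.

Lemma upd1U b G e : upd (upd b [set e]) G = upd b (e |: G).
Proof.
apply: funext => y; rewrite /upd ex1.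
have -> : [exists e' in e |: G, toE e' == y] = (toE e == y) || [exists e' in G, toE e' == y].
  apply/existsP/orP => [[e' /andP[/finset.setU1P [->|h] h']]|[h|/existsP[e' /andP[h h']]]].
  - by left.
  - by right; apply/existsP; exists e'; rewrite h h'.
  - by exists e; rewrite finset.setU11 h.
  - by exists e'; rewrite finset.setU1r.
by case: (toE e == y); case: [exists _ in _, _]; case: (b y).
Qed.

Lemma upd_id b e : b (toE e) -> upd b [set e] = b.
Proof.
move=> h; apply: funext => y; rewrite /upd ex1.
by case: eqP => [<-|]; rewrite ?h.
Qed.

Lemma DG_rec (f : config d -> R) F e b : e \in F ->
  DG F f b = DG (F :\ e) f (upd b [set e]) - DG (F :\ e) f b.
Proof.
move=> eF; rewrite /DG (bigID (fun G => e \in G)) /=; congr (_ + _).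
  rewrite (reindex_onto (fun G => e |: G) (fun G => G :\ e)) /=; last first.
    by move=> G /andP[_ h]; rewrite finset.setD1K.
  apply: eq_big => j.
    apply/idP/idP => [/andP[/andP[h1 _] /eqP h2]|h].
      by rewrite -h2 finset.setSD.
    move: h; rewrite finset.subsetD1 => /andP[h1 h2].
    by rewrite finset.setU11 andbT finset.setU1K // eqxx andbT finset.subUset finset.sub1set eF.
  move=> _; by rewrite upd1U finset.setDDl.
rewrite -sumrN; apply: eq_big => G.
  by rewrite finset.subsetD1.
move=> /andP[h1 h2].
rewrite (finset.cardsD1 e (F :\: G)) inE eF h2 /= finset.setDDl finset.setDDl finset.setUC exprS mulN1r mulNr.
by [].
Qed.

Lemma DG_zero (f : config d -> R) G e b : e \in G -> b (toE e) -> DG G f b = 0.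
Proof. by move=> h1 h2; rewrite (DG_rec _ _ h1) upd_id // subrr. Qed.

Definition hmul e (g : config d -> R) := fun c : config d => (c (toE e))%:R * g c.

Lemma DG_prod_notin (g : config d -> R) F e b : e \notin F -> b (toE e) = false ->
  DG F (hmul e g) b = 0.
Proof.
move=> h1 h2; apply: big1 => G hG; rewrite /hmul upd_toE h2 orbF.
have -> : (e \in G) = false.
  by apply/negP => h; rewrite (fintype.subsetP hG _ h) in h1.
by rewrite mul0r mulr0.
Qed.

Lemma DG_prod_true (g : config d -> R) F e b : b (toE e) ->
  DG F (hmul e g) b = DG F g b.
Proof.
move=> h; apply: eq_bigr => G _; by rewrite /hmul upd_toE h orbT mul1r.
Qed.

Lemma DG_prod_in (g : config d -> R) F e b : e \in F -> b (toE e) = false ->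
  DG F (hmul e g) b = DG (F :\ e) g (upd b [set e]).
Proof.
move=> h1 h2; rewrite (DG_rec _ _ h1) (@DG_prod_notin g (F :\ e) e b) ?finset.setD11 // subr0.
by rewrite DG_prod_true // upd_toE finset.set11.
Qed.

Lemma per_e (g : config d -> R) (k : nat) e a : (1 <= k)%N -> e \in Ebox d m ->
  \sum_(F : {set bedge d m} | (F \subset Ebox d m) && (#|F| == k)) DG F (hmul e g) a
  = (a (toE e))%:R * \sum_(F : {set bedge d m} | (F \subset Ebox d m) && (#|F| == k)) DG F g a
  + ((upd a [set e] (toE e))%:R - (a (toE e))%:R) *
    \sum_(G : {set bedge d m} | (G \subset Ebox d m) && (#|G| == k.-1)) DG G g (upd a [set e]).
Proof.
move=> hk he; rewrite upd_toE finset.set11 /=.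
case ha: (a (toE e)).
  rewrite (eq_bigr (fun F => DG F g a)) => [/=|F _]; [ring | exact: DG_prod_true].
suff -> : \sum_(F : {set bedge d m} | (F \subset Ebox d m) && (#|F| == k)) DG F (hmul e g) a
  = \sum_(G : {set bedge d m} | (G \subset Ebox d m) && (#|G| == k.-1)) DG G g (upd a [set e]).
  rewrite /=; ring.
rewrite (bigID (fun F => e \in F)) /= [X in _ + X]big1 ?addr0; last first.
  by move=> F /andP[_ h]; apply: DG_prod_notin.
rewrite [RHS](bigID (fun G => e \in G)) /= [X in X + _]big1 ?add0r; last first.
  by move=> G /andP[_ h]; apply: (DG_zero _ h); rewrite upd_toE finset.set11.
rewrite (reindex_onto (fun G => e |: G) (fun G => G :\ e)) /=; last first.
  by move=> G /andP[_ h]; rewrite finset.setD1K.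
apply: eq_big => j.
  apply/idP/idP => [/andP[/andP[/andP[h1 h2] _] /eqP h3]|/andP[/andP[h1 h2] h3]].
    have hj : e \notin j.
      by have := finset.setD11 e (e |: j); rewrite h3 => ->.
    move: h1 h2; rewrite finset.subUset => /andP[_ ->]; rewrite finset.cardsU1 hj /=.
    move/eqP => <-; rewrite andbT; apply/eqP; lia.
  rewrite finset.subUset finset.sub1set he h1 finset.cardsU1 h3 finset.setU11 finset.setU1K // eqxx /= !andbT.
  apply/eqP; move/eqP: h2 => ->; lia.
move=> /andP[_ /eqP h3].
have hj : e \notin j by have := finset.setD11 e (e |: j); rewrite h3 => ->.
by rewrite DG_prod_in ?finset.setU11 // finset.setU1K.
Qed.
End Comb.
Unset Implicit Arguments.
Theorem lemma3p2 (R : realType) (d m k : nat) (xi : 'rV[R]_d)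
  (v : config d -> pt d -> R) (a : config d) :
  (0 < m)%N -> (1 <= k)%N -> is_vsel m xi v ->
  \sum_(F : {set bedge d m} | (F \subset Ebox d m) && (#|F| == k))
      DG F (Energy m xi) a
  = (box_card d m)%:R^-1 *
      \sum_(e in Ebox d m)
        grad (lxi xi) (toE e) *
        ((a (toE e))%:R *
         \sum_(F : {set bedge d m} | (F \subset Ebox d m) && (#|F| == k))
            DG F (fun b => grad (v b) (toE e)) a)
  + (box_card d m)%:R^-1 *
      \sum_(e in Ebox d m)
        \sum_(e' in Ebox d m)
          grad (lxi xi) (toE e') *
          (((upd a [set e] (toE e'))%:R - (a (toE e'))%:R) *
           \sum_(G : {set bedge d m} | (G \subset Ebox d m) && (#|G| == k.-1))
              DG G (fun b => grad (v b) (toE e')) (upd a [set e])).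
Proof.
move=> hm hk hv.
set N := (box_card d m)%:R^-1.
have E1 : forall F : {set bedge d m}, DG F (Energy m xi) a = N * \sum_(e in Ebox d m)
   grad (lxi xi) (toE e) * DG F (hmul e (fun b => grad (v b) (toE e))) a.
  move=> F; rewrite /DG.
  transitivity (\sum_(G : {set bedge d m} | G \subset F) \sum_(e in Ebox d m)
     N * (grad (lxi xi) (toE e) * ((-1) ^+ #|F :\: G| *
        hmul e (fun b => grad (v b) (toE e)) (upd a G)))).
    apply: eq_bigr => G _; rewrite (energy_v hv) -/N !big_distrr /=.
    apply: eq_bigr => e _; rewrite /hmul mulrCA; congr (_ * _); exact: mulrCA.
  rewrite exchange_big /= big_distrr /=; apply: eq_bigr => e _.
  by rewrite big_distrr big_distrr /=.
rewrite (eq_bigr _ (fun F _ => E1 F)) -big_distrr /= exchange_big /=.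
have E2 : forall e, e \in Ebox d m ->
  \sum_(e' in Ebox d m)
          grad (lxi xi) (toE e') *
          (((upd a [set e] (toE e'))%:R - (a (toE e'))%:R) *
           \sum_(G : {set bedge d m} | (G \subset Ebox d m) && (#|G| == k.-1))
              DG G (fun b => grad (v b) (toE e')) (upd a [set e]))
  = grad (lxi xi) (toE e) *
          (((upd a [set e] (toE e))%:R - (a (toE e))%:R) *
           \sum_(G : {set bedge d m} | (G \subset Ebox d m) && (#|G| == k.-1))
              DG G (fun b => grad (v b) (toE e)) (upd a [set e])).
  move=> e he; rewrite (bigD1 e he) /= [X in _ + X]big1 ?addr0 // => e' /andP[_ hne].
  by rewrite upd_toE finset.in_set1 (negbTE hne) /= subrr mul0r mulr0.
rewrite [X in _ = _ + N * X](eq_bigr _ E2) -mulrDr -big_split /=; congr (_ * _).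
apply: eq_bigr => e he; by rewrite -big_distrr /= (@per_e R d m _ k e a hk he) mulrDr.
Qed.
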